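(* Let $\langle B,\wedge,{}'\rangle$ be an algebra with $\wedge$ binary and ${}'$ unary satisfying $x\wedge(y\wedge z)\approx (y\wedge x)\wedge z$ and $x\approx (x'\wedge y)'\wedge(x'\wedge y')'$. Then $x\wedge(y\wedge u)=x\wedge(u\wedge y)$ for all $x,y,u\in B$. *)


Theorem lemma6p12 (B : Type) (meet : B -> B -> B) (c : B -> B)
  (H1 : forall x y z : B, meet x (meet y z) = meet (meet y x) z)
  (H2 : forall x y : B, x = meet (c (meet (c x) y)) (c (meet (c x) (c y)))) :
  forall x y u : B, meet x (meet y u) = meet x (meet u y).
Proof.
  assert (S1_2 : forall v0 v1 v2 v3 : B, (meet v0 (meet v1 (meet v2 v3))) = (meet v0 (meet v2 (meet v1 v3)))).
  { intros v0 v1 v2 v3.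
  pose proof (H1 v0 v1 (meet v2 v3)) as I0.
  pose proof (H1 v0 (meet v1 v2) v3) as I1.
  pose proof (H1 v2 v1 v0) as I2.
  pose proof (H1 v2 v1 v3) as I3.
  pose proof (H1 (meet v1 v0) v2 v3) as I4.
  congruence. }
  assert (S1_3 : forall v0 v1 v2 : B, (meet v0 v1) = (meet (c (meet (c v0) (c v2))) (meet (c (meet (c v0) v2)) v1))).
  { intros v0 v1 v2.
  pose proof (H1 (c (meet (c v0) (c v2))) (c (meet (c v0) v2)) v1) as I0.
  pose proof (H2 v0 v2) as I1.
  congruence. }
  assert (S1_4 : forall v0 v1 : B, (meet (c (meet (c v0) (c v1))) v0) = (meet v0 (c (meet (c v0) (c v1))))).
  { intros v0 v1.
  pose proof (H2 v0 v1) as I0.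
  pose proof (S1_3 v0 (c (meet (c v0) (c v1))) v1) as I1.
  congruence. }
  assert (S1_5 : forall v0 v1 : B, (meet (c (meet (c (meet (c v0) v1)) (meet (c v0) (c v1)))) (c v0)) = (meet (c v0) v1)).
  { intros v0 v1.
  pose proof (H2 v0 v1) as I0.
  pose proof (H2 (meet (c v0) v1) (meet (c v0) (c v1))) as I1.
  congruence. }
  assert (S1_8 : forall v0 v1 v2 : B, (meet (c (meet (c v0) (c v1))) (meet v0 v2)) = (meet v0 (meet (c (meet (c v0) (c v1))) v2))).
  { intros v0 v1 v2.
  pose proof (H1 v0 (c (meet (c v0) (c v1))) v2) as I0.
  pose proof (H1 (c (meet (c v0) (c v1))) v0 v2) as I1.
  pose proof (S1_4 v0 v1) as I2.
  congruence. }
  assert (S1_14 : forall v0 v1 v2 v3 : B, (meet v0 (meet v1 v2)) = (meet v0 (meet (c (meet (c v1) v3)) (meet (c (meet (c v1) (c v3))) v2)))).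
  { intros v0 v1 v2 v3.
  pose proof (H1 v0 v1 v2) as I0.
  pose proof (H1 v0 (c (meet (c v1) v3)) (meet (c (meet (c v1) (c v3))) v2)) as I1.
  pose proof (H1 (meet (c (meet (c v1) v3)) v0) (c (meet (c v1) (c v3))) v2) as I2.
  pose proof (S1_3 v1 v0 v3) as I3.
  congruence. }
  assert (S1_15 : forall v0 v1 v2 : B, (meet v0 (meet (c (meet (c v1) v2)) v1)) = (meet v0 (meet v1 (c (meet (c v1) (c (c v2))))))).
  { intros v0 v1 v2.
  pose proof (H2 v1 (c v2)) as I0.
  pose proof (S1_14 v0 v1 (c (meet (c v1) (c (c v2)))) v2) as I1.
  congruence. }
  assert (S1_16 : forall v0 v1 v2 v3 : B, (meet (c (meet (c v0) (c v1))) (meet v2 (meet (c (meet (c v0) v1)) v3))) = (meet v0 (meet v2 v3))).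
  { intros v0 v1 v2 v3.
  pose proof (S1_2 (c (meet (c v0) (c v1))) (c (meet (c v0) v1)) v2 v3) as I0.
  pose proof (S1_3 v0 (meet v2 v3) v1) as I1.
  congruence. }
  assert (S1_17 : forall v0 v1 v2 : B, (meet (c (meet (c v0) (c v1))) (meet v2 v0)) = (meet v0 (meet v2 (c (meet (c v0) (c v1)))))).
  { intros v0 v1 v2.
  pose proof (H2 v0 v1) as I0.
  pose proof (S1_16 v0 v1 v2 (c (meet (c v0) (c v1)))) as I1.
  congruence. }
  assert (S1_19 : forall v0 v1 v2 : B, (meet (c v0) (meet (c (meet (c (meet (c v0) v1)) (meet (c v0) (c v1)))) v2)) = (meet v1 (meet (c v0) v2))).
  { intros v0 v1 v2.
  pose proof (H1 v1 (c v0) v2) as I0.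
  pose proof (H2 v0 v1) as I1.
  pose proof (S1_3 (meet (c v0) v1) v2 (meet (c v0) (c v1))) as I2.
  congruence. }
  assert (S1_20 : forall v0 v1 : B, (meet (c v0) (meet (c v0) v1)) = (meet v1 (meet (c v0) (c v0)))).
  { intros v0 v1.
  pose proof (S1_5 v0 v1) as I0.
  pose proof (S1_19 v0 v1 (c v0)) as I1.
  congruence. }
  assert (S1_25 : forall v0 v1 : B, (meet (c (meet v0 (meet (c v1) (c v1)))) (c (meet (c v1) (c (meet (c v1) v0))))) = v1).
  { intros v0 v1.
  pose proof (H2 v1 (meet (c v1) v0)) as I0.
  pose proof (S1_20 v1 v0) as I1.
  congruence. }
  assert (S1_26 : forall v0 : B, (meet (c (meet (c v0) (meet (c v0) (c (meet (c v0) v0))))) (c v0)) = (meet (c v0) v0)).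
  { intros v0.
  pose proof (S1_5 v0 v0) as I0.
  pose proof (S1_20 v0 (c (meet (c v0) v0))) as I1.
  congruence. }
  assert (S1_34 : forall v0 : B, (meet (c v0) v0) = (meet v0 (meet (c v0) (c (meet (c v0) (c (meet (c v0) (c (meet (c v0) v0))))))))).
  { intros v0.
  pose proof (S1_19 v0 v0 (c (meet (c v0) (c (meet (c v0) (c (meet (c v0) v0))))))) as I0.
  pose proof (S1_25 (c (meet (c v0) v0)) v0) as I1.
  congruence. }
  assert (S1_35 : forall v0 : B, (meet (c v0) v0) = (meet v0 (c v0))).
  { intros v0.
  pose proof (S1_3 v0 (c v0) (meet (c v0) (c (meet (c v0) v0)))) as I0.
  pose proof (S1_17 v0 (meet (c v0) (c (meet (c v0) v0))) (c v0)) as I1.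
  pose proof (S1_26 v0) as I2.
  pose proof (S1_34 v0) as I3.
  congruence. }
  assert (S1_38 : forall v0 : B, (meet (c (meet (c (c v0)) v0)) (c (meet (c v0) (c (c v0))))) = (c v0)).
  { intros v0.
  pose proof (H2 (c v0) v0) as I0.
  pose proof (S1_35 (c v0)) as I1.
  congruence. }
  assert (S1_41 : forall v0 v1 : B, (meet (c (meet (c v0) (c v0))) (meet (c (meet v0 (c v0))) v1)) = (meet v0 v1)).
  { intros v0 v1.
  pose proof (S1_3 v0 v1 v0) as I0.
  pose proof (S1_35 v0) as I1.
  congruence. }
  assert (S1_47 : forall v0 v1 : B, (meet (c (meet (c v0) (c (c v0)))) (meet (c (meet (c (c v0)) v0)) v1)) = (meet (c v0) v1)).
  { intros v0 v1.
  pose proof (S1_3 (c v0) v1 v0) as I0.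
  pose proof (S1_35 (c v0)) as I1.
  congruence. }
  assert (S1_65 : forall v0 v1 : B, (meet v0 (meet (c (meet (c (c v0)) v0)) v1)) = (meet (c v0) (meet (c (meet (c v0) (c v0))) v1))).
  { intros v0 v1.
  pose proof (S1_16 v0 (c v0) (c (meet (c (c v0)) v0)) v1) as I0.
  pose proof (S1_47 v0 (meet (c (meet (c v0) (c v0))) v1)) as I1.
  congruence. }
  assert (S1_78 : forall v0 : B, (meet (c (meet (c (c v0)) (c (c v0)))) (meet (c (meet v0 (c v0))) v0)) = (meet v0 (c v0))).
  { intros v0.
  pose proof (S1_4 v0 (c v0)) as I0.
  pose proof (S1_15 (c (meet (c (c v0)) (c (c v0)))) v0 v0) as I1.
  pose proof (S1_35 v0) as I2.
  pose proof (S1_41 (c v0) v0) as I3.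
  congruence. }
  assert (S1_95 : forall v0 : B, (meet (c (meet (c (meet (c (c v0)) v0)) (meet (c v0) (c (c v0))))) (c (c v0))) = (meet (c (c v0)) v0)).
  { intros v0.
  pose proof (S1_5 (c v0) v0) as I0.
  pose proof (S1_35 (c v0)) as I1.
  congruence. }
  assert (S1_100 : forall v0 v1 : B, (meet (c (meet (c (c v0)) (c (c v0)))) (meet v0 v1)) = (meet v0 (meet (c (meet (c (c v0)) v0)) v1))).
  { intros v0 v1.
  pose proof (S1_3 v0 v1 (c v0)) as I0.
  pose proof (S1_41 (c v0) (meet (c (meet (c v0) (c v0))) v1)) as I1.
  pose proof (S1_65 v0 v1) as I2.
  congruence. }
  assert (S1_127 : forall v0 v1 v2 v3 : B, (meet (c (meet (c v0) (c v1))) (meet v2 (meet v3 v0))) = (meet v0 (meet v2 (meet v3 (c (meet (c v0) (c v1))))))).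
  { intros v0 v1 v2 v3.
  pose proof (H1 v2 v3 v0) as I0.
  pose proof (H1 v2 v3 (c (meet (c v0) (c v1)))) as I1.
  pose proof (S1_17 v0 v1 (meet v3 v2)) as I2.
  congruence. }
  assert (S1_160 : forall v0 v1 : B, (meet (c v0) (meet v1 v0)) = (meet v0 (meet v1 (c v0)))).
  { intros v0 v1.
  pose proof (S1_2 v0 (c (meet (c (c v0)) v0)) v1 (c (meet (c v0) (c (c v0))))) as I0.
  pose proof (S1_38 v0) as I1.
  pose proof (S1_47 v0 (meet v1 v0)) as I2.
  pose proof (S1_127 v0 (c v0) (c (meet (c (c v0)) v0)) v1) as I3.
  congruence. }
  assert (S1_175 : forall v0 v1 : B, (meet v0 (meet v1 (c v1))) = (meet v1 (meet (c v1) v0))).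
  { intros v0 v1.
  pose proof (S1_5 v1 v0) as I0.
  pose proof (S1_19 v1 v0 v1) as I1.
  pose proof (S1_35 v1) as I2.
  pose proof (S1_160 v1 (c (meet (c (meet (c v1) v0)) (meet (c v1) (c v0))))) as I3.
  congruence. }
  assert (S1_247 : forall v0 : B, (meet (c (meet (c v0) (meet (c (c v0)) (c (meet (c (c v0)) v0))))) (c (c v0))) = (meet (c (c v0)) v0)).
  { intros v0.
  pose proof (S1_95 v0) as I0.
  pose proof (S1_175 (c (meet (c (c v0)) v0)) (c v0)) as I1.
  congruence. }
  assert (S1_416 : forall v0 v1 : B, (meet v0 (c (meet (c v0) v1))) = (meet (c (meet (c v0) v1)) v0)).
  { intros v0 v1.
  pose proof (H2 v0 v1) as I0.
  pose proof (S1_3 v0 (c (meet (c v0) v1)) v1) as I1.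
  pose proof (S1_20 (meet (c v0) v1) (c (meet (c v0) (c v1)))) as I2.
  congruence. }
  assert (S1_417 : forall v0 : B, (meet (c (meet v0 (c v0))) v0) = (meet v0 (c (meet v0 (c v0))))).
  { intros v0.
  pose proof (S1_35 v0) as I0.
  pose proof (S1_416 v0 v0) as I1.
  congruence. }
  assert (S1_418 : forall v0 v1 : B, (meet v0 (meet (c (meet (c v0) (c v1))) (c (meet (c v0) v1)))) = (meet v0 v0)).
  { intros v0 v1.
  pose proof (S1_3 v0 v0 v1) as I0.
  pose proof (S1_8 v0 v1 (c (meet (c v0) v1))) as I1.
  pose proof (S1_416 v0 v1) as I2.
  congruence. }
  assert (S1_429 : forall v0 : B, (meet v0 (meet (c (meet (c (c v0)) v0)) (c (meet v0 (c v0))))) = (meet v0 (c v0))).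
  { intros v0.
  pose proof (S1_78 v0) as I0.
  pose proof (S1_100 v0 (c (meet v0 (c v0)))) as I1.
  pose proof (S1_417 v0) as I2.
  congruence. }
  assert (S1_522 : forall v0 v1 : B, (meet v0 (meet (c (meet (c (c v0)) v0)) v1)) = (meet (c v0) (meet (c (meet (c v0) (c (c (c v0))))) v1))).
  { intros v0 v1.
  pose proof (S1_14 (c (meet (c (c v0)) (c (c v0)))) v0 v1 (c (c v0))) as I0.
  pose proof (S1_41 (c v0) (meet (c (meet (c v0) (c (c (c v0))))) v1)) as I1.
  pose proof (S1_100 v0 v1) as I2.
  congruence. }
  assert (S1_1023 : forall v0 : B, (meet v0 (meet (c (c v0)) (c (meet (c v0) (c (meet (c (c v0)) (c (meet (c (c v0)) v0)))))))) = (meet v0 (c (c v0)))).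
  { intros v0.
  pose proof (S1_3 v0 (c (c v0)) (meet (c (c v0)) (c (meet (c (c v0)) v0)))) as I0.
  pose proof (S1_17 v0 (meet (c (c v0)) (c (meet (c (c v0)) v0))) (c (c v0))) as I1.
  pose proof (S1_247 v0) as I2.
  congruence. }
  assert (S1_1153 : forall v0 v1 : B, (meet (c (c v0)) (meet (c (meet (c v0) (meet (c (c v0)) (c (meet (c (c v0)) v0))))) v1)) = (meet v0 (meet (c (c v0)) v1))).
  { intros v0 v1.
  pose proof (S1_19 (c v0) v0 v1) as I0.
  pose proof (S1_35 (c v0)) as I1.
  pose proof (S1_175 (c (meet (c (c v0)) v0)) (c v0)) as I2.
  congruence. }
  assert (S1_1154 : forall v0 : B, (meet (c (c v0)) v0) = (meet v0 (c (c v0)))).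
  { intros v0.
  pose proof (H2 v0 (meet (c (c v0)) (c (meet (c (c v0)) v0)))) as I0.
  pose proof (S1_1023 v0) as I1.
  pose proof (S1_1153 v0 (c (meet (c v0) (c (meet (c (c v0)) (c (meet (c (c v0)) v0))))))) as I2.
  congruence. }
  assert (S1_1156 : forall v0 : B, (meet (c (meet v0 (c (c v0)))) (c (meet (c v0) (c (c v0))))) = (c v0)).
  { intros v0.
  pose proof (S1_38 v0) as I0.
  pose proof (S1_1154 v0) as I1.
  congruence. }
  assert (S1_1157 : forall v0 : B, (meet v0 (meet (c (meet v0 (c (c v0)))) (c (meet v0 (c v0))))) = (meet v0 (c v0))).
  { intros v0.
  pose proof (S1_429 v0) as I0.
  pose proof (S1_1154 v0) as I1.
  congruence. }
  assert (S1_1256 : forall v0 v1 : B, (meet v0 (meet (c (meet v0 (c (c v0)))) v1)) = (meet (c v0) (meet (c (meet (c v0) (c (c (c v0))))) v1))).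
  { intros v0 v1.
  pose proof (S1_522 v0 v1) as I0.
  pose proof (S1_1154 v0) as I1.
  congruence. }
  assert (S1_1257 : forall v0 : B, (meet (c v0) (c (c v0))) = (meet v0 (c v0))).
  { intros v0.
  pose proof (S1_1156 v0) as I0.
  pose proof (S1_1157 (c v0)) as I1.
  pose proof (S1_1256 v0 (c (meet (c v0) (c (c v0))))) as I2.
  congruence. }
  assert (S1_1260 : forall v0 : B, (meet (c (meet v0 (c (c v0)))) (c (meet v0 (c v0)))) = (c v0)).
  { intros v0.
  pose proof (S1_1156 v0) as I0.
  pose proof (S1_1257 v0) as I1.
  congruence. }
  assert (S1_1261 : forall v0 : B, (meet v0 (c (c v0))) = (meet v0 v0)).
  { intros v0.
  pose proof (S1_418 v0 (c (c v0))) as I0.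
  pose proof (S1_1260 (c v0)) as I1.
  congruence. }
  assert (S1_1264 : forall v0 : B, (meet (c (meet v0 v0)) (c (meet v0 (c v0)))) = (c v0)).
  { intros v0.
  pose proof (S1_1260 v0) as I0.
  pose proof (S1_1261 v0) as I1.
  congruence. }
  assert (S1_1265 : forall v0 : B, v0 = (c (c v0))).
  { intros v0.
  pose proof (H2 v0 (c v0)) as I0.
  pose proof (S1_1264 (c v0)) as I1.
  congruence. }
  assert (dneg : forall x : B, (c (c x)) = x).
  { intros x.
  pose proof (S1_1265 x) as I0.
  congruence. }
  assert (S2_4 : forall v0 v1 v2 v3 : B, (meet v0 (meet v1 (meet v2 v3))) = (meet v0 (meet v2 (meet v1 v3)))).
  { intros v0 v1 v2 v3.
  pose proof (H1 v0 v1 (meet v2 v3)) as I0.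
  pose proof (H1 v0 (meet v1 v2) v3) as I1.
  pose proof (H1 v2 v1 v0) as I2.
  pose proof (H1 v2 v1 v3) as I3.
  pose proof (H1 (meet v1 v0) v2 v3) as I4.
  congruence. }
  assert (S2_5 : forall v0 v1 : B, (meet (c (meet v0 v1)) (c (meet v0 (c v1)))) = (c v0)).
  { intros v0 v1.
  pose proof (H2 (c v0) v1) as I0.
  pose proof (dneg v0) as I1.
  congruence. }
  assert (S2_6 : forall v0 v1 : B, (meet (c (meet v0 (c v1))) (c (meet v0 v1))) = (c v0)).
  { intros v0 v1.
  pose proof (dneg v1) as I0.
  pose proof (S2_5 v0 (c v1)) as I1.
  congruence. }
  assert (S2_8 : forall v0 v1 v2 : B, (meet (c v0) v1) = (meet (c (meet v0 v2)) (meet (c (meet v0 (c v2))) v1))).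
  { intros v0 v1 v2.
  pose proof (H1 (c (meet v0 v2)) (c (meet v0 (c v2))) v1) as I0.
  pose proof (S2_6 v0 v2) as I1.
  congruence. }
  assert (S2_11 : forall v0 v1 : B, (meet (c (meet (c (meet v0 v1)) (meet v0 (c v1)))) v0) = (meet v0 v1)).
  { intros v0 v1.
  pose proof (H2 (meet v0 v1) (meet v0 (c v1))) as I0.
  pose proof (dneg v0) as I1.
  pose proof (S2_5 v0 v1) as I2.
  congruence. }
  assert (S2_20 : forall v0 v1 v2 : B, (meet v0 (meet v1 v2)) = (meet v1 (meet (c (meet (c (meet v1 v0)) (meet v1 (c v0)))) v2))).
  { intros v0 v1 v2.
  pose proof (H1 v0 v1 v2) as I0.
  pose proof (H1 v1 (c (meet (c (meet v1 v0)) (meet v1 (c v0)))) v2) as I1.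
  pose proof (S2_11 v1 v0) as I2.
  congruence. }
  assert (S2_21 : forall v0 v1 : B, (meet v0 (meet v0 v1)) = (meet v1 (meet v0 v0))).
  { intros v0 v1.
  pose proof (S2_11 v0 v1) as I0.
  pose proof (S2_20 v1 v0 v0) as I1.
  congruence. }
  assert (S2_39 : forall v0 v1 : B, (meet (c (meet v0 (c (meet v0 v1)))) (c (meet v1 (meet v0 v0)))) = (c v0)).
  { intros v0 v1.
  pose proof (S2_6 v0 (meet v0 v1)) as I0.
  pose proof (S2_21 v0 v1) as I1.
  congruence. }
  assert (S2_119 : forall v0 v1 v2 v3 : B, (meet (c (meet v0 v1)) (meet v2 (meet (c (meet v0 (c v1))) v3))) = (meet (c v0) (meet v2 v3))).
  { intros v0 v1 v2 v3.
  pose proof (S2_4 (c (meet v0 v1)) (c (meet v0 (c v1))) v2 v3) as I0.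
  pose proof (S2_8 v0 (meet v2 v3) v1) as I1.
  congruence. }
  assert (S2_120 : forall v0 v1 v2 : B, (meet (c (meet v0 v1)) (meet v2 (c v0))) = (meet (c v0) (meet v2 (c (meet v0 v1))))).
  { intros v0 v1 v2.
  pose proof (S2_6 v0 v1) as I0.
  pose proof (S2_119 v0 v1 v2 (c (meet v0 v1))) as I1.
  congruence. }
  assert (S2_130 : forall v0 v1 v2 : B, (meet (c (meet v0 (meet v1 v1))) (meet (c (meet v1 (c (meet v1 v0)))) v2)) = (meet (c v1) v2)).
  { intros v0 v1 v2.
  pose proof (S2_8 v1 v2 (meet v1 v0)) as I0.
  pose proof (S2_21 v1 v0) as I1.
  congruence. }
  assert (S2_745 : forall v0 v1 : B, (meet (c v0) (c v1)) = (meet (c v1) (c v0))).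
  { intros v0 v1.
  pose proof (S2_39 v1 v0) as I0.
  pose proof (S2_120 v0 (meet v1 v1) (c (meet v1 (c (meet v1 v0))))) as I1.
  pose proof (S2_130 v0 v1 (c v0)) as I2.
  congruence. }
  assert (S2_746 : forall v0 v1 : B, (meet v0 (c v1)) = (meet (c v1) v0)).
  { intros v0 v1.
  pose proof (dneg v0) as I0.
  pose proof (S2_745 (c v0) v1) as I1.
  congruence. }
  assert (S2_747 : forall v0 v1 : B, (meet v0 v1) = (meet v1 v0)).
  { intros v0 v1.
  pose proof (dneg v1) as I0.
  pose proof (S2_746 v0 (c v1)) as I1.
  congruence. }
  assert (main_goal : forall x y u : B, (meet x (meet y u)) = (meet x (meet u y))).
  { intros x y u.
  pose proof (S2_747 y u) as I0.
  congruence. }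
  exact main_goal.
Qed.
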